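(* Let $0<q<1$, let $n,i$ be integers with $1\le i\le n$, and let $x\in[0,1]$. Then $$\frac{1}{([1-x]_q+[x]_q)^{n-i}}\sum_{k=i-1}^n\frac{\binom{k}{i}}{\binom{n}{i}}B_{k,n}(x,q)=\sum_{k=0}^i q^{\binom{k}{2}}\binom{x}{k}_q[k]_q!\,S(i,k:q).$$
   Context: Let $q$ be a real number with $0<q<1$. For real $x$, the $q$-number is $[x]_q=\frac{1-q^x}{1-q}$. For a nonnegative integer $k$ and $x\in[0,1]$, the modified $q$-Bernstein polynomials $B_{k,n}(x,q)$, $n=0,1,2,\dots$, are defined by the generating function $$\frac{t^k e^{[1-x]_q t}[x]_q^k}{k!}=\sum_{n=0}^\infty B_{k,n}(x,q)\frac{t^n}{n!}.$$ Here $\binom{k}{i}=0$ when $k<i$. Let $[0]_q!=1$ and $[k]_q!=[k]_q[k-1]_q\cdots[1]_q$. The Gaussian binomial coefficient is $\binom{k}{j}_q=\frac{[k]_q!}{[j]_q![k-j]_q!}$ for $0\le j\le k$. For real $x$, $\binom{x}{k}_q=\frac{[x]_q[x-1]_q\cdots[x-k+1]_q}{[k]_q!}$, with $\binom{x}{0}_q=1$. The $q$-Stirling numbers of the second kind are $$S(n,k:q)=\frac{q^{-\binom{k}{2}}}{[k]_q!}\sum_{j=0}^k(-1)^j q^{\binom{j}{2}}\binom{k}{j}_q[k-j]_q^{\,n},$$ with the convention $0^0=1$. *)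

(* Defs.v *)
From HB Require Import structures.
From mathcomp Require Import all_boot all_order all_algebra.
From mathcomp Require Import reals exp.
Set Implicit Arguments. Unset Strict Implicit. Unset Printing Implicit Defensive.
Import Order.TTheory GRing.Theory Num.Theory.
Local Open Scope ring_scope.

Definition qnum {R : realType} (q x : R) : R := (1 - powR q x) / (1 - q).

Definition qfact {R : realType} (q : R) (k : nat) : R :=
  \prod_(1 <= j < k.+1) qnum q j%:R.

Definition qgauss {R : realType} (q : R) (k j : nat) : R :=
  qfact q k / (qfact q j * qfact q (k - j)).

Definition qbinomR {R : realType} (q x : R) (k : nat) : R :=
  (\prod_(0 <= j < k) qnum q (x - j%:R)) / qfact q k.

(* q-Stirling numbers of the second kind S(n,k:q) (0^0 = 1 via ^+ 0) *)
Definition qStirling2 {R : realType} (q : R) (n k : nat) : R :=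
  q ^- 'C(k, 2) / qfact q k *
  \sum_(0 <= j < k.+1)
     (-1) ^+ j * q ^+ 'C(j, 2) * qgauss q k j * (qnum q (k - j)%:R) ^+ n.

(* Modified q-Bernstein polynomial B_{k,n}(x,q): the coefficient of t^n/n!
   in t^k e^{[1-x]_q t} [x]_q^k / k!, i.e. 'C(n,k) [x]_q^k [1-x]_q^(n-k)
   for n >= k and 0 for n < k (here 'C(n,k) = 0 when n < k). *)
Definition qBernstein {R : realType} (q x : R) (k n : nat) : R :=
  ('C(n, k))%:R * (qnum q x) ^+ k * (qnum q (1 - x)) ^+ (n - k).

(* Main.v *)
Require Import Defs.
From HB Require Import structures.
From mathcomp Require Import all_boot all_order all_algebra.
From mathcomp Require Import reals exp ring.
Import Order.TTheory GRing.Theory Num.Theory.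
Set Implicit Arguments.
Local Open Scope ring_scope.

Lemma bE {R : realType} (q : R) m : 0 < q -> qnum q m%:R = (1 - q ^+ m) / (1 - q).
Proof. by move=> hq; rewrite /qnum powR_mulrn // ltW. Qed.

Lemma b0 {R : realType} (q : R) : qnum q 0%:R = 0.
Proof. by rewrite /qnum powRr0 subrr mul0r. Qed.

Lemma b_gt0 {R : realType} (q : R) m : 0 < q -> q < 1 -> 0 < qnum q m.+1%:R.
Proof.
move=> h0 h1; rewrite bE // divr_gt0 // ?subr_gt0 //.
by rewrite exprn_ilt1 ?ltW.
Qed.

Lemma b_neq0 {R : realType} (q : R) m : 0 < q -> q < 1 -> qnum q m.+1%:R != 0.
Proof. by move=> h0 h1; rewrite gt_eqF // b_gt0. Qed.

Lemma qfactS {R : realType} (q : R) k : qfact q k.+1 = qfact q k * qnum q k.+1%:R.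
Proof. by rewrite /qfact big_nat_recr. Qed.

Lemma qfact_neq0 {R : realType} (q : R) k : 0 < q -> q < 1 -> qfact q k != 0.
Proof.
move=> h0 h1; elim: k => [|k IH]; first by rewrite /qfact big_nil oner_neq0.
by rewrite qfactS mulf_neq0 // b_neq0.
Qed.

Lemma F1 {R : realType} (q : R) m j : 0 < q -> q < 1 -> (j <= m)%N ->
  qgauss q m.+1 j.+1 * qnum q j.+1%:R = qnum q m.+1%:R * qgauss q m j.
Proof.
move=> h0 h1 hj; rewrite /qgauss subSS !qfactS.
move: (qfact_neq0 q m h0 h1) (qfact_neq0 q j h0 h1) (qfact_neq0 q (m - j) h0 h1)
  (b_neq0 q j h0 h1).
move: (qfact q m) (qfact q j) (qfact q (m - j)) (qnum q j.+1%:R) (qnum q m.+1%:R).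
move=> a b c d e ha hb hc hd.
by field; rewrite ?ha ?hb ?hc ?hd.
Qed.

Lemma F2 {R : realType} (q : R) m j : 0 < q -> q < 1 -> (j <= m)%N ->
  qgauss q m.+1 j * qnum q (m.+1 - j)%:R = qnum q m.+1%:R * qgauss q m j.
Proof.
move=> h0 h1 hj; rewrite /qgauss subSn // !qfactS.
move: (qfact_neq0 q m h0 h1) (qfact_neq0 q j h0 h1) (qfact_neq0 q (m - j) h0 h1)
  (b_neq0 q (m - j) h0 h1).
move: (qfact q m) (qfact q j) (qfact q (m - j)) (qnum q (m - j).+1%:R) (qnum q m.+1%:R).
move=> a b c d e ha hb hc hd.
by field; rewrite ?ha ?hb ?hc ?hd.
Qed.

Lemma bsplit {R : realType} (q : R) k j : 0 < q -> q < 1 -> (j <= k)%N ->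
  qnum q (k - j)%:R = qnum q k%:R - q ^+ (k - j) * qnum q j%:R.
Proof.
move=> h0 h1 hj; rewrite !bE // -{2}(subnK hj) exprD.
have : 1 - q != 0 by rewrite subr_eq0 eq_sym lt_eqF.
move=> *; by field.
Qed.

Lemma binlem (i k p : nat) : (k <= p)%N ->
  ('C(i + k, i) * 'C(i + p, i + k) = 'C(i + p, i) * 'C(p, k))%N.
Proof.
move=> hk.
have e1 := bin_fact (leq_addr k i); rewrite addKn in e1.
have e2 := @bin_fact (i + p) (i + k); rewrite leq_add2l subnDl in e2.
have e3 := bin_fact hk.
have e4 := bin_fact (leq_addr p i); rewrite addKn in e4.
apply/eqP; rewrite -(eqn_pmul2r (fact_gt0 i)) -(eqn_pmul2r (fact_gt0 k))
  -(eqn_pmul2r (fact_gt0 (p - k))); apply/eqP.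
transitivity (i + p)`!%N.
  rewrite -(e2 hk) -e1; ring.
rewrite -e4 -e3; ring.
Qed.

Definition E {R : realType} (q : R) (i k : nat) : R :=
  \sum_(0 <= j < k.+1)
     (-1) ^+ j * q ^+ 'C(j, 2) * qgauss q k j * (qnum q (k - j)%:R) ^+ i.

Lemma sS {R : realType} (q : R) j :
  (-1) ^+ j.+1 * q ^+ 'C(j.+1, 2) = - (q ^+ j * ((-1) ^+ j * q ^+ 'C(j, 2))).
Proof. rewrite binS bin1 exprD exprS; ring. Qed.

Lemma lemA {R : realType} (q : R) i m : 0 < q -> q < 1 ->
  \sum_(0 <= j < m.+2) (-1) ^+ j * q ^+ 'C(j, 2) * qgauss q m.+1 j *
      (q ^+ (m.+1 - j) * qnum q j%:R) * (qnum q (m.+1 - j)%:R) ^+ i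
  = - (qnum q m.+1%:R * q ^+ m * E q i m).
Proof.
move=> h0 h1; rewrite big_nat_recl // b0 !mulr0 mul0r add0r /E.
rewrite !mulr_sumr -sumrN; apply: eq_big_nat => j /andP[_ hj].
rewrite ltnS in hj.
rewrite sS subSS.
have e := F1 q m j h0 h1 hj.
have -> : q ^+ m = q ^+ (m - j) * q ^+ j by rewrite -exprD subnK.
transitivity (- (q ^+ (m - j) * q ^+ j * ((-1) ^+ j * q ^+ 'C(j, 2)) *
   (qgauss q m.+1 j.+1 * qnum q j.+1%:R) * qnum q (m - j)%:R ^+ i)); first ring.
rewrite e; ring.
Qed.

Lemma lemB {R : realType} (q : R) m : 0 < q -> q < 1 ->
  \sum_(0 <= j < m.+2) (-1) ^+ j * q ^+ 'C(j, 2) * qgauss q m.+1 j *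
      qnum q (m.+1 - j)%:R
  = qnum q m.+1%:R * E q 0 m.
Proof.
move=> h0 h1; rewrite big_nat_recr // /= subnn b0 mulr0 addr0 /E.
rewrite !mulr_sumr; apply: eq_big_nat => j /andP[_ hj].
rewrite ltnS in hj.
have e := F2 q m j h0 h1 hj.
rewrite expr0 mulr1 -mulrA e; ring.
Qed.

Lemma Erec {R : realType} (q : R) i m : 0 < q -> q < 1 ->
  E q i.+1 m.+1 = qnum q m.+1%:R * (E q i m.+1 + q ^+ m * E q i m).
Proof.
move=> h0 h1.
transitivity (qnum q m.+1%:R * E q i m.+1 +
  \sum_(0 <= j < m.+2) (-1) ^+ j * q ^+ 'C(j, 2) * qgauss q m.+1 j *
      - ((q ^+ (m.+1 - j) * qnum q j%:R) * (qnum q (m.+1 - j)%:R) ^+ i)).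
  rewrite /E mulr_sumr -big_split /=; apply: eq_big_nat => j /andP[_ hj].
  rewrite exprS {1}bsplit //; ring.
have -> : forall (F : nat -> R) n, \sum_(0 <= j < n) F j = \sum_(0 <= j < n) F j by [].
rewrite (eq_bigr (fun j => - ((-1) ^+ j * q ^+ 'C(j, 2) * qgauss q m.+1 j *
      (q ^+ (m.+1 - j) * qnum q j%:R) * (qnum q (m.+1 - j)%:R) ^+ i))); last first.
  by move=> j _; ring.
rewrite sumrN lemA //; ring.
Qed.

Lemma E0rec {R : realType} (q : R) m : 0 < q -> q < 1 ->
  E q 0 m.+1 = (1 - q ^+ m) * E q 0 m.
Proof.
move=> h0 h1.
apply: (mulfI (b_neq0 q m h0 h1)).
transitivity (\sum_(0 <= j < m.+2) (-1) ^+ j * q ^+ 'C(j, 2) * qgauss q m.+1 j *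
      qnum q (m.+1 - j)%:R +
  \sum_(0 <= j < m.+2) (-1) ^+ j * q ^+ 'C(j, 2) * qgauss q m.+1 j *
      (q ^+ (m.+1 - j) * qnum q j%:R) * (qnum q (m.+1 - j)%:R) ^+ 0).
  rewrite /E mulr_sumr -big_split /=; apply: eq_big_nat => j /andP[_ hj].
  rewrite ltnS in hj.
  rewrite (bsplit q m.+1 j h0 h1 hj); ring.
rewrite lemA // lemB //; ring.
Qed.

Lemma E0vanish {R : realType} (q : R) k : 0 < q -> q < 1 -> E q 0 k.+1 = 0.
Proof.
move=> h0 h1; elim: k => [|k IH]; first by rewrite E0rec // expr0 subrr mul0r.
by rewrite E0rec // IH mulr0.
Qed.

Lemma Evanish {R : realType} (q : R) i k : 0 < q -> q < 1 -> (i < k)%N -> E q i k = 0.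
Proof.
move=> h0 h1; elim: i k => [|i IH] [|k] //= hk; first by rewrite E0vanish.
rewrite ltnS in hk.
by rewrite Erec // (IH k.+1) ?(IH k) ?mulr0 ?addr0 ?mulr0 // ltnW.
Qed.

Lemma Ezero {R : realType} (q : R) i : E q i.+1 0 = 0.
Proof. by rewrite /E big_nat1 subnn b0 expr0n mulr0. Qed.

Lemma qbinomRS {R : realType} (q x : R) k : 0 < q -> q < 1 ->
  qbinomR q x k.+1 * qnum q k.+1%:R = qbinomR q x k * qnum q (x - k%:R).
Proof.
move=> h0 h1; rewrite /qbinomR big_nat_recr //= qfactS.
move: (qfact_neq0 q k h0 h1) (b_neq0 q k h0 h1).
move: (qfact q k) (qnum q k.+1%:R) => a b ha hb.
by field; rewrite ?ha ?hb.
Qed.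

Lemma keyx {R : realType} (q x : R) k : 0 < q -> q < 1 ->
  qnum q k%:R + q ^+ k * qnum q (x - k%:R) = qnum q x.
Proof.
move=> h0 h1; rewrite bE // /qnum powRB; last by apply/implyP => _; rewrite gt_eqF.
rewrite powR_mulrn ?ltW //.
have hk : q ^+ k != 0 by rewrite expf_neq0 // gt_eqF.
have hc : 1 - q != 0 by rewrite subr_eq0 eq_sym lt_eqF.
move: hk hc; move: (q ^+ k) (q `^ x) => a b ha hc.
by field; rewrite ?ha ?hc.
Qed.

Lemma main_id {R : realType} (q x : R) i : 0 < q -> q < 1 ->
  \sum_(0 <= k < i.+1) qbinomR q x k * E q i k = qnum q x ^+ i.
Proof.
move=> h0 h1; elim: i => [|i IH].
  rewrite big_nat1 /qbinomR /E big_nat1 big_geq // /qgauss /qfact big_geq // !expr0 /=; by rewrite !mulr1 invr1 !mul1r.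
rewrite big_nat_recl // Ezero mulr0 add0r.
rewrite (eq_big_nat _ _ (F2 := fun k => qbinomR q x k.+1 * qnum q k.+1%:R * E q i k.+1
   + qbinomR q x k * (q ^+ k * qnum q (x - k%:R)) * E q i k)); last first.
  move=> k _; rewrite Erec // mulrA mulrDr.
  by rewrite qbinomRS //; congr (_ + _); ring.
rewrite big_split /=.
have h1' : \sum_(0 <= k < i.+1) qbinomR q x k.+1 * qnum q k.+1%:R * E q i k.+1
   = \sum_(0 <= k < i.+1) qbinomR q x k * qnum q k%:R * E q i k.
  have := @big_nat_recl R 0 +%R i.+1 0 (fun k => qbinomR q x k * qnum q k%:R * E q i k) (leq0n _).
  rewrite /= b0 mulr0 mul0r add0r => <-.
  by rewrite big_nat_recr //= (Evanish q i i.+1 h0 h1 (ltnSn i)) mulr0 addr0.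
rewrite h1' -big_split /= exprS -IH mulr_sumr; apply: eq_big_nat => k _.
rewrite -(keyx q x k h0 h1); ring.
Qed.

Lemma qnum_ge0 {R : realType} (q y : R) : 0 < q -> q < 1 -> 0 <= y -> 0 <= qnum q y.
Proof.
move=> h0 h1 hy; rewrite /qnum divr_ge0 //; last by rewrite subr_ge0 ltW.
rewrite subr_ge0 -(powRr0 q); have hq : 0 < q <= 1 by rewrite h0 ltW.
by have := ger_powR hq hy.
Qed.

Lemma qnum_gt0 {R : realType} (q y : R) : 0 < q -> q < 1 -> 0 < y -> 0 < qnum q y.
Proof.
move=> h0 h1 hy; rewrite /qnum divr_gt0 // ?subr_gt0 //.
have hle : q `^ y <= 1.
  rewrite -(powRr0 q); have hq : 0 < q <= 1 by rewrite h0 ltW.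
  by have := ger_powR hq (ltW hy).
rewrite lt_neqAle hle andbT powR_eq1 negb_or lt_eqF //= negb_or.
by rewrite -leNgt ltW //= gt_eqF.
Qed.

Lemma RHS_eq {R : realType} (q x : R) i : 0 < q -> q < 1 ->
  \sum_(0 <= k < i.+1)
       q ^+ 'C(k, 2) * qbinomR q x k * qfact q k * qStirling2 q i k
  = \sum_(0 <= k < i.+1) qbinomR q x k * E q i k.
Proof.
move=> h0 h1; apply: eq_big_nat => k _.
rewrite /qStirling2 -/(E q i k).
have hq : q ^+ 'C(k, 2) != 0 by rewrite expf_neq0 // gt_eqF.
move: hq (qfact_neq0 q k h0 h1).
move: (q ^+ 'C(k, 2)) (qfact q k) => a b ha hb.
by field; rewrite ?ha ?hb.
Qed.

Theorem theorem8 (R : realType) (q : R) (n i : nat) (x : R)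
  (hq0 : 0 < q) (hq1 : q < 1) (hi1 : (1 <= i)%N) (hin : (i <= n)%N)
  (hx0 : 0 <= x) (hx1 : x <= 1) :
  (qnum q (1 - x) + qnum q x) ^- (n - i) *
    \sum_(i.-1 <= k < n.+1)
       (('C(k, i))%:R / ('C(n, i))%:R) * qBernstein q x k n
  = \sum_(0 <= k < i.+1)
       q ^+ 'C(k, 2) * qbinomR q x k * qfact q k * qStirling2 q i k.
Proof.
rewrite RHS_eq // main_id //.
set a := qnum q x; set bb := qnum q (1 - x).
have ha : 0 <= a by apply: qnum_ge0.
have hb : 0 <= bb by apply: qnum_ge0; rewrite // subr_ge0.
have hab : bb + a != 0.
  rewrite gt_eqF //; have [e0|hx] := eqVneq x 0.
    by rewrite /bb e0 subr0 ltr_wpDr // qnum_gt0.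
  by rewrite ltr_wpDl // qnum_gt0 // lt_neqAle eq_sym hx.
case: i hi1 hin => [//|i] _ hin.
have [p ->] : exists p, n = (i.+1 + p)%N by exists (n - i.+1)%N; rewrite subnKC.
rewrite /= big_nat_recl; last by rewrite addSn leqW // leq_addr.
rewrite bin_small // mul0r mul0r add0r.
rewrite (big_addn 0 (i.+1 + p) i) addKn /=.
have -> : (i.+1 + p - i = p.+1)%N by rewrite addSn subSn ?leq_addr // addKn.
rewrite (eq_big_nat _ _ (F2 := fun k => a ^+ i.+1 * (bb ^+ (p - k) * a ^+ k *+ 'C(p, k))));
  last first.
  move=> k /andP[_ hk]; rewrite ltnS in hk.
  have -> : (k + i).+1 = (i.+1 + k)%N by rewrite addSn addnC.
  rewrite /qBernstein -/a -/bb subnDl exprD -[bb ^+ (p - k) * a ^+ k *+ _]mulr_natr.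
  have e := binlem i.+1 k p hk.
  have hC : ('C(i.+1 + p, i.+1))%:R != 0 :> R by rewrite pnatr_eq0 -lt0n bin_gt0 leq_addr.
  have eR : ('C(i.+1 + k, i.+1))%:R * ('C(i.+1 + p, i.+1 + k))%:R
     = ('C(i.+1 + p, i.+1))%:R * ('C(p, k))%:R :> R by rewrite -!natrM e.
  move: eR hC.
  move: ('C(i.+1 + k, i.+1))%:R ('C(i.+1 + p, i.+1 + k))%:R ('C(i.+1 + p, i.+1))%:R
    ('C(p, k))%:R => c1 c2 c3 c4 eR hC.
  transitivity ((c1 * c2) / c3 * a ^+ i.+1 * a ^+ k * bb ^+ (p - k)); first by ring.
  rewrite eR; field; by rewrite hC.
rewrite -mulr_sumr big_mkord -exprDn mulrCA mulVf ?mulr1 //.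
by rewrite expf_neq0.
Qed.
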